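(* Let $G=(V,E)$ be a finite simple undirected graph of bounded growth with maximum degree $\Delta$ and neighborhood independence bounded by a constant $c$, and let $R$ be an integer with $1\le R<\Delta$. Run the procedure Extended-VM on $G$ with parameter $R$. Then in every phase, each vertex of $V$ is selected by at most $O(\Delta c/R)$ vertices.
   Context: The neighborhood independence of $G$ is the maximum over $v$ of the size of an independent set contained in the neighbor set $\Gamma(v)$. $G$ has bounded growth if for every $r$ the number of pairwise independent vertices within distance $r$ of any vertex is bounded by a function of $r$ alone. Procedure Extended-VM$(G,R)$: compute a proper $(\Delta+1)$-coloring of $G$; partition the colors into $R$ super-classes, each consisting of $O(\Delta/R)$ colors (each vertex belongs to the super-class of its color); then perform $R$ phases in round-robin order, one per super-class $S$; in the phase of $S$, the vertices of $S$ are active, and each active vertex $v$ selects all its neighbors not in $S$, divides its backup data equally among them, and sends the parts to them. *)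

(* Defs.v *)
From mathcomp Require Import all_boot.
Set Implicit Arguments. Unset Strict Implicit. Unset Printing Implicit Defensive.

Definition simple_graph (T : finType) (e : rel T) : Prop :=
  symmetric e /\ irreflexive e.

Definition nbhd (T : finType) (e : rel T) (v : T) : {set T} := [set u | e v u].

Definition maxdeg (T : finType) (e : rel T) : nat := \max_(v : T) #|nbhd e v|.

Definition independent (T : finType) (e : rel T) (I : {set T}) : bool :=
  [forall x in I, forall y in I, ~~ e x y].

Definition nbhd_indep (T : finType) (e : rel T) : nat :=
  \max_(v : T) \max_(I : {set T} | (I \subset nbhd e v) && independent e I) #|I|.

Fixpoint ball (T : finType) (e : rel T) (r : nat) (v : T) : {set T} :=
  match r with
  | 0 => [set v]
  | r'.+1 => ball e r' v :|: [set w | [exists u in ball e r' v, e u w]]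
  end.

Definition growth_bounded_by (T : finType) (e : rel T) (f : nat -> nat) : Prop :=
  forall (r : nat) (v : T) (I : {set T}),
    I \subset ball e r v -> independent e I -> #|I| <= f r.

Definition proper_coloring (T : finType) (e : rel T) (k : nat)
  (col : T -> 'I_k) : Prop :=
  forall u v, e u v -> col u != col v.

(* Extended-VM, phase of super-class s: the vertices of S (color in super-class s)
   are active; each active vertex u selects all its neighbors not in S.
   selectors e col sc s v = set of vertices that select v in the phase of s. *)
Definition in_superclass (T : finType) (k R : nat) (col : T -> 'I_k)
  (sc : 'I_k -> 'I_R) (s : 'I_R) (u : T) : bool := sc (col u) == s.

Definition selectors (T : finType) (e : rel T) (k R : nat) (col : T -> 'I_k)
  (sc : 'I_k -> 'I_R) (s : 'I_R) (v : T) : {set T} :=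
  [set u | [&& in_superclass col sc s u, e u v & ~~ in_superclass col sc s v]].

(* Main.v *)
Require Import Defs.
From mathcomp Require Import all_boot.

Lemma indep_le (T : finType) (e : rel T) (v : T) (I : {set T}) :
  I \subset nbhd e v -> independent e I -> #|I| <= nbhd_indep e.
Proof.
move=> Hs Hi; rewrite /nbhd_indep.
apply: (leq_trans _ (leq_bigmax v)).
by apply: (leq_bigmax_cond (F := fun I : {set T} => #|I|)); rewrite Hs Hi.
Qed.

Theorem lemma3 :
  forall K : nat, exists C : nat,
  forall (T : finType) (e : rel T) (f : nat -> nat) (c R : nat)
    (col : T -> 'I_(maxdeg e).+1) (sc : 'I_(maxdeg e).+1 -> 'I_R),
    simple_graph e ->
    growth_bounded_by e f ->
    nbhd_indep e <= c ->
    1 <= R -> R < maxdeg e ->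
    proper_coloring e col ->
    (forall s : 'I_R, #|[set k | sc k == s]| * R <= K * maxdeg e) ->
    forall (s : 'I_R) (v : T),
      #|selectors e col sc s v| * R <= C * maxdeg e * c.
Proof.
move=> K; exists K => T e f c R col sc [esym eirr] _ Hc _ _ Hcol Hsc s v.
set A := selectors e col sc s v.
have H1 : #|A| <= #|[set k | sc k == s]| * c.
  rewrite -sum1_card (partition_big col (fun k => k \in [set k | sc k == s])); last first.
    by move=> u; rewrite /A /selectors !inE /in_superclass => /and3P[].
  rewrite -sum_nat_const; apply: leq_sum => k _.
  rewrite sum1_card.
  apply: leq_trans Hc.
  rewrite -(cardsE [pred i in A | col i == k]).
  apply: (@indep_le _ e v).
    apply/subsetP => u; rewrite !inE /selectors => /andP[/andP[_ /andP[Huv _]] _].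
    by rewrite esym.
  apply/forallP => x; apply/implyP => Hx; apply/forallP => y; apply/implyP => Hy.
  apply/negP => Hxy.
  move: Hx Hy; rewrite !inE => /andP[_ /eqP Hx] /andP[_ /eqP Hy].
  by move: (Hcol _ _ Hxy); rewrite Hx Hy eqxx.
apply: (leq_trans (leq_mul H1 (leqnn R))).
by rewrite mulnAC leq_mul2r Hsc orbT.
Qed.
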